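(* Let $\Bbbk$ be a field, $R=\Bbbk[x_1,\dots,x_m]$ with the standard $\mathbb Z^m$-grading, $L$ a Noetherian multigraded $R$-module with minimal multihomogeneous free presentation $E\xrightarrow{\Phi}G\to L\to 0$, and $S$ a multihomogeneous basis of $E$. Let $\alpha$ be a generic element of $\Lambda(L)$ and let $\omega$ be a total ordering of $I_\alpha$. Then for all $i$, \[ \dim_\Bbbk H_i(V(\alpha,\phi,\omega)_\bullet)=\begin{cases}\beta(\mathbf M_\alpha) & \text{if } i=|I_\alpha|-r(\mathbf M_\alpha),\\ 0&\text{otherwise.}\end{cases} \]
   Context: For nonempty $A\subseteq S$ let $\deg A\in\mathbb Z^m$ be the componentwise maximum of the multidegrees of the elements of $A$; $\Lambda(L)=\{\deg A:\emptyset\ne A\subseteq S\}$. An element $\alpha\in\Lambda(L)$ is generic if $\{A\subseteq S:\deg A=\alpha\}$ is a closed interval $\{A: I_\alpha\subseteq A\subseteq I^\alpha\}$ of the Boolean lattice of subsets of $S$; set $I(\alpha)=I^\alpha\setminus I_\alpha$. Regard $\Bbbk$ as an $R$-module via $x_i\mapsto 1$, let $W=G\otimes_R\Bbbk$, let $U_S$ be the $\Bbbk$-space with basis $\{e_a:a\in S\}$ identified with $E\otimes_R\Bbbk$ via $e_a=a\otimes1$, and $\phi=\Phi\otimes_R\Bbbk\colon U_S\to W$. For $B\subseteq S$ put $V_B=\phi(\operatorname{span}\{e_a:a\in B\})$. The matroid $\mathbf M_\alpha$ on $I_\alpha$ is the one represented by the composite $\operatorname{span}\{e_a:a\in I_\alpha\}\xrightarrow{\phi}W\to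 W/V_{I(\alpha)}$ (equivalently, the contraction of the restriction of $\mathbf M(\phi)$ to $I^\alpha$ by $I(\alpha)$); its rank is $r(\mathbf M_\alpha)=\dim V_{I^\alpha}-\dim V_{I(\alpha)}$ and its rank function is $r_\alpha(J)=\dim V_{I(\alpha)\cup J}-\dim V_{I(\alpha)}$. Its $\beta$-invariant is $\beta(\mathbf M_\alpha)=(-1)^{r_\alpha(I_\alpha)}\sum_{J\subseteq I_\alpha}(-1)^{|J|}r_\alpha(J)$. Subsets of $I_\alpha$ are identified with increasing sequences with respect to $\omega$. The complex $V(\alpha,\phi,\omega)_\bullet$ has $V(\alpha,\phi,\omega)_i=\bigoplus_{A\subseteq I_\alpha,\ |A|=i}V_{I^\alpha\setminus A}$ for $0\le i\le|I_\alpha|$, and its differential has, for $A\subseteq I_\alpha$ and $c\in I_\alpha\setminus A$, component $V_{I^\alpha\setminus(A\cup\{c\})}\to V_{I^\alpha\setminus A}$ equal to the inclusion times the sign of the permutation sorting $(c,I_\alpha\setminus(A\cup\{c\}))$ into increasing order (other components zero). *)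

(* Defs.v *)
From HB Require Import structures.
From mathcomp Require Import all_boot all_order all_algebra.
From mathcomp Require Import mpoly.
Set Implicit Arguments. Unset Strict Implicit. Unset Printing Implicit Defensive.
Import Order.TTheory GRing.Theory Num.Theory.
Local Open Scope ring_scope.

(* The basis S of E is indexed by 'I_s (dE a = multidegree of the a-th basis
   element), the homogeneous basis of G by 'I_g (degrees dG).
   The presentation map Phi is given by its matrix: Phi(e_a) = sum_j Phi a j f_j. *)

Definition mdeg_t (m : nat) := {ffun 'I_m -> int}.

Definition mhomog (k : fieldType) (m : nat) (d : mdeg_t m) (p : {mpoly k[m]}) :=
  forall mon : 'X_{1..m}, mon \in msupp p -> forall i : 'I_m, (mon i)%:Z = d i.

Definition mhomog_map (k : fieldType) (m s g : nat)
  (dE : 'I_s -> mdeg_t m) (dG : 'I_g -> mdeg_t m) (Phi : 'I_s -> 'I_g -> {mpoly k[m]}) :=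
  forall a j, mhomog [ffun i => dE a i - dG j i] (Phi a j).

(* Minimality of E --Phi--> G -> coker Phi -> 0:
   image of Phi lies in mG (m = (x_1,...,x_m)), and ker Phi lies in mE. *)
Definition minimal_pres (k : fieldType) (m s g : nat)
  (Phi : 'I_s -> 'I_g -> {mpoly k[m]}) :=
  (forall a j, (Phi a j)@_(0%MM) = 0) /\
  (forall c : 'I_s -> {mpoly k[m]},
      (forall j, \sum_(a < s) c a * Phi a j = 0) -> forall a, (c a)@_(0%MM) = 0).

Definition degS (m s : nat) (dE : 'I_s -> mdeg_t m) (A : {set 'I_s}) : mdeg_t m :=
  [ffun i => match [pick a in A] with
             | Some a0 => \big[Num.max/dE a0 i]_(a in A) dE a i
             | None => 0
             end].

Definition in_Lambda (m s : nat) (dE : 'I_s -> mdeg_t m) (alpha : mdeg_t m) :=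
  exists A : {set 'I_s}, A != set0 /\ degS dE A = alpha.

(* alpha is generic, with {A : deg A = alpha} = [Ilo, Ihi] *)
Definition generic_interval (m s : nat) (dE : 'I_s -> mdeg_t m) (alpha : mdeg_t m)
  (Ilo Ihi : {set 'I_s}) :=
  in_Lambda dE alpha /\
  [set A : {set 'I_s} | (A != set0) && (degS dE A == alpha)]
    = [set A : {set 'I_s} | (Ilo \subset A) && (A \subset Ihi)].

(* phi = Phi (x) k, where k is an R-module via x_i |-> 1: the matrix over k. *)
Definition phi_of (k : fieldType) (m s g : nat) (Phi : 'I_s -> 'I_g -> {mpoly k[m]})
  : 'M[k]_(s, g) := \matrix_(a < s, j < g) (Phi a j).@[fun _ => 1].

(* V_B = phi(span{e_a : a in B}) = span of the rows of phi indexed by B *)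
Definition VB (k : fieldType) (s g : nat) (phi : 'M[k]_(s, g)) (B : {set 'I_s})
  : {vspace 'rV[k]_g} := (\sum_(a in B) <[row a phi]>)%VS.

(* rank function of M_alpha, and its rank, Idiff = I(alpha) = Ihi \ Ilo *)
Definition rk_alpha (k : fieldType) (s g : nat) (phi : 'M[k]_(s, g))
  (Ilo Ihi J : {set 'I_s}) : int :=
  (\dim (VB phi ((Ihi :\: Ilo) :|: J)))%:Z - (\dim (VB phi (Ihi :\: Ilo)))%:Z.

Definition rank_Malpha (k : fieldType) (s g : nat) (phi : 'M[k]_(s, g))
  (Ilo Ihi : {set 'I_s}) : nat :=
  (\dim (VB phi Ihi) - \dim (VB phi (Ihi :\: Ilo)))%N.

Definition beta_Malpha (k : fieldType) (s g : nat) (phi : 'M[k]_(s, g))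
  (Ilo Ihi : {set 'I_s}) : int :=
  (-1) ^+ `|rk_alpha phi Ilo Ihi Ilo|%N *
  \sum_(J : {set 'I_s} | J \subset Ilo) (-1) ^+ #|J| * rk_alpha phi Ilo Ihi J.

(* The complex V(alpha, phi, omega), realised inside the ambient space
   Amb = {ffun {set 'I_s} -> W}: the summand V_{Ihi \ A} (A subset of Ilo)
   sits in the A-coordinate. *)
Definition Amb (k : fieldType) (s g : nat) := {ffun {set 'I_s} -> 'rV[k]_g}.

Definition injA (k : fieldType) (s g : nat) (A : {set 'I_s}) : 'Hom('rV[k]_g, Amb k s g) :=
  linfun (fun v : 'rV[k]_g => [ffun B : {set 'I_s} => if B == A then v else 0] : Amb k s g).

Definition Vcx (k : fieldType) (s g : nat) (phi : 'M[k]_(s, g))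
  (Ilo Ihi : {set 'I_s}) (i : nat) : {vspace Amb k s g} :=
  (\sum_(A : {set 'I_s} | (A \subset Ilo) && (#|A| == i)) (@injA k s g A @: VB phi (Ihi :\: A)))%VS.

(* sign of the permutation sorting (c, Ilo \ (A u {c})) increasingly w.r.t. omega,
   i.e. (-1)^(number of inversions) = (-1)^#{b in Ilo \ (A u {c}) | b <_omega c}.
   The total order omega on Ilo is given by an injective rank map omega. *)
Definition sgn_cx (k : fieldType) (s : nat) (omega : 'I_s -> nat)
  (Ilo A : {set 'I_s}) (c : 'I_s) : k :=
  (-1) ^+ #|[set b in Ilo :\: (c |: A) | (omega b < omega c)%N]|.

(* The differential (of degree -1) on the ambient space: the component
   V_{Ihi \ (A u {c})} -> V_{Ihi \ A} is inclusion times the sign. *)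
Definition dcx_fun (k : fieldType) (s g : nat) (omega : 'I_s -> nat) (Ilo : {set 'I_s})
  (f : Amb k s g) : Amb k s g :=
  [ffun A : {set 'I_s} => if A \subset Ilo then
     \sum_(c in Ilo :\: A) sgn_cx k omega Ilo A c *: f (c |: A) else 0].

Definition dcx (k : fieldType) (s g : nat) (omega : 'I_s -> nat) (Ilo : {set 'I_s})
  : 'End(Amb k s g) := linfun (@dcx_fun k s g omega Ilo).

Definition dimH (k : fieldType) (s g : nat) (phi : 'M[k]_(s, g)) (omega : 'I_s -> nat)
  (Ilo Ihi : {set 'I_s}) (i : nat) : nat :=
  (\dim (Vcx phi Ilo Ihi i :&: lker (@dcx k s g omega Ilo))
   - \dim (@dcx k s g omega Ilo @: Vcx phi Ilo Ihi i.+1))%N.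

(* Main.v *)
Require Import Defs.
From HB Require Import structures.
From mathcomp Require Import all_boot all_order all_algebra.
From mathcomp Require Import mpoly.
From mathcomp Require Import ring.
Set Implicit Arguments. Unset Strict Implicit. Unset Printing Implicit Defensive.
Import Order.TTheory GRing.Theory Num.Theory.
Local Open Scope ring_scope.

Lemma card_sel (T : finType) (Y : {set T}) (P : pred T) y : y \in Y ->
  #|[set b in Y | P b]| = (#|[set b in Y :\ y | P b]| + P y)%N.
Proof.
move=> yY; case Py: (P y).
  have -> : [set b in Y | P b] = y |: [set b in Y :\ y | P b].
    apply/setP=> b; rewrite !inE; case: (eqVneq b y) => [->|] //=; by rewrite yY Py.
  by rewrite cardsU1 !inE eqxx /= addnC.
rewrite addn0; apply: eq_card=> b; rewrite !inE.
by case: (eqVneq b y) => [->|] //=; rewrite Py andbF.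
Qed.

Lemma linfunE' (K : fieldType) (aT rT : vectType K) (f : aT -> rT) (lf : linear f) u :
  linfun f u = f u.
Proof.
pose fL : {linear aT -> rT} := HB.pack f (GRing.isLinear.Build _ _ _ _ f lf).
exact: (lfunE fL).
Qed.

Lemma sum_antisym (n : nat) (V : zmodType) (X : {set 'I_n}) (G : 'I_n -> 'I_n -> V) :
  (forall c c', c \in X -> c' \in X -> c != c' -> G c' c = - G c c') ->
  \sum_(c in X) \sum_(c' in X :\ c) G c c' = 0.
Proof.
move=> HG.
pose S1 := \sum_c \sum_c' (if [&& c \in X, c' \in X & (c < c')%N] then G c c' else 0).
pose S2 := \sum_c \sum_c' (if [&& c \in X, c' \in X & (c' < c)%N] then G c c' else 0).
have E : S2 = - S1.
  rewrite /S2 exchange_big /S1 -sumrN; apply: eq_bigr => c _.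
  rewrite -sumrN; apply: eq_bigr => c' _.
  case cX: (c \in X); case c'X: (c' \in X); rewrite /= ?oppr0 //.
  case: (ltngtP c c') => [lt|lt|_]; rewrite ?oppr0 //.
  by rewrite HG //; apply/eqP=> E; rewrite E ltnn in lt.
have -> : \sum_(c in X) \sum_(c' in X :\ c) G c c' = S1 + S2.
  rewrite /S1 /S2 -big_split big_mkcond /=; apply: eq_bigr => c _.
  rewrite -big_split /=; case cX: (c \in X) => /=; last first.
    by rewrite big1 // => c' _; rewrite addr0.
  rewrite big_mkcond; apply: eq_bigr => c' _; rewrite !inE.
  case: (ltngtP c c') => [lt|lt|/val_inj ->]; rewrite ?eqxx /= ?andbT ?andbF ?addr0 ?add0r //;
    (have ne : c' != c by apply/eqP=> E0; rewrite E0 ltnn in lt); by rewrite ne.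
by rewrite E subrr.
Qed.

Lemma dim_add_line (K : fieldType) (vT : vectType K) (V : {vspace vT}) v :
  v \notin V -> \dim (V + <[v]>) = (\dim V).+1.
Proof.
move=> vV; rewrite dimv_disjoint_sum.
  rewrite dim_vline; case: eqP => [v0|]; last by rewrite addn1.
  by rewrite v0 mem0v in vV.
apply/eqP; rewrite -subv0; apply/subvP => w /memv_capP [wV /vlineP [a wa]].
rewrite memv0; case: (eqVneq a 0) => [a0|an0]; first by rewrite wa a0 scale0r.
have : v = a^-1 *: w by rewrite wa scalerA mulVf // scale1r.
by move=> vw; rewrite vw rpredZ in vV.
Qed.

Lemma line_cap0 (K : fieldType) (vT : vectType K) (V : {vspace vT}) v :
  v \notin V -> (<[v]> :&: V = 0)%VS.
Proof.
move=> vV; apply/eqP; rewrite -subv0; apply/subvP => w /memv_capP [/vlineP [a wa] wV].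
rewrite memv0; case: (eqVneq a 0) => [a0|an0]; first by rewrite wa a0 scale0r.
have : v = a^-1 *: w by rewrite wa scalerA mulVf // scale1r.
by move=> vw; rewrite vw rpredZ in vV.
Qed.

Section Cx.
Variables (k : fieldType) (s g : nat) (phi : 'M[k]_(s,g)) (omega : 'I_s -> nat).
Variables (N Ihi : {set 'I_s}).
Hypothesis homega : {in N &, injective omega}.

Local Notation Am := (Amb k s g).
Implicit Types (X Y A B F U : {set 'I_s}).
Local Notation W := ('rV[k]_g).

Definition sgn (A : {set 'I_s}) c : k := sgn_cx k omega N A c.

Lemma sgn2 A c : sgn A c * sgn A c = 1.
Proof. by rewrite /sgn /sgn_cx -exprD -signr_odd oddD addbb. Qed.

Lemma sgn_swap (A : {set 'I_s}) c c' : c \in N -> c' \in N -> c != c' -> c \notin A -> c' \notin A ->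
  sgn A c * sgn (c |: A) c' = - (sgn A c' * sgn (c' |: A) c).
Proof.
move=> cN c'N cc' cA c'A; rewrite /sgn /sgn_cx.
have h1 : c' \in N :\: (c |: A) by rewrite !inE c'N (negPf c'A) eq_sym (negPf cc').
have h2 : c \in N :\: (c' |: A) by rewrite !inE cN (negPf cA) (negPf cc').
rewrite (card_sel _ h1) (card_sel _ h2).
have E1 : (N :\: (c |: A)) :\ c' = N :\: (c' |: (c |: A)).
  by apply/setP=> b; rewrite !inE; case: (b == c'); case: (b == c); rewrite ?andbF.
have E2 : (N :\: (c' |: A)) :\ c = N :\: (c |: (c' |: A)).
  by apply/setP=> b; rewrite !inE; case: (b == c'); case: (b == c); rewrite ?andbF.
have E3 : N :\: (c' |: (c |: A)) = N :\: (c |: (c' |: A)) by rewrite setUCA.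
rewrite E1 E2 E3 /=.
set a := #|_|; set b := #|_|.
have neq : omega c != omega c'.
  by apply/eqP=> /(homega cN c'N) /eqP; rewrite (negPf cc').
have [lt1|] := ltnP (omega c') (omega c).
  by rewrite (leq_gtF (ltnW lt1)) !exprD /= expr1 expr0; ring.
rewrite leq_eqVlt (negPf neq) /= => lt2.
by rewrite lt2 !exprD /= expr1 expr0; ring.
Qed.


Definition rng (F U A : {set 'I_s}) := (F \subset A) && (A \subset U).

Definition dg F U (f : Am) : Am :=
  [ffun A => if rng F U A then \sum_(c in U :\: A) sgn A c *: f (c |: A) else 0].

Lemma dgE F U f A :
  dg F U f A = if rng F U A then \sum_(c in U :\: A) sgn A c *: f (c |: A) else 0.
Proof. by rewrite ffunE. Qed.

Lemma dg_lin F U : linear (dg F U).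
Proof.
move=> a f h; apply/ffunP=> A; rewrite !ffunE; case: ifP => _; last by rewrite scaler0 addr0.
rewrite scaler_sumr -big_split /=; apply: eq_bigr => c _.
by rewrite !ffunE scalerDr !scalerA mulrC.
Qed.

Lemma dgB F U f h : dg F U (f - h) = dg F U f - dg F U h.
Proof. by rewrite -scaleN1r addrC dg_lin scaleN1r addrC. Qed.

Lemma dgD F U f h : dg F U (f + h) = dg F U f + dg F U h.
Proof. by have := dg_lin F U 1 f h; rewrite !scale1r. Qed.

Lemma dg0 F U : dg F U 0 = 0.
Proof. by apply/ffunP=> A; rewrite !ffunE; case: ifP=> // _; rewrite big1 // => c _; rewrite ffunE scaler0. Qed.

Lemma injAE (A : {set 'I_s}) (v : W) :
  @injA k s g A v = [ffun B => if B == A then v else 0].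
Proof.
rewrite /injA linfunE' // => a u w; apply/ffunP=> B; rewrite !ffunE.
by case: ifP => _; rewrite ?scaler0 ?addr0.
Qed.

Definition spc F U i A : {vspace W} :=
  if rng F U A && (#|A| == i) then VB phi (Ihi :\: A) else 0%VS.

Definition Cx F U i : {vspace Am} :=
  (\sum_(A | rng F U A && (#|A| == i)) (@injA k s g A @: VB phi (Ihi :\: A)))%VS.

Lemma memC F U i x : (x \in Cx F U i) <-> (forall A, x A \in spc F U i A).
Proof.
split.
  move/memv_sumP=> [vs Hvs ->] B; rewrite sum_ffunE.
  rewrite /spc; case: ifP => PB.
    apply: rpred_sum => A PA; have /memv_imgP[u Hu ->] := Hvs A PA.
    rewrite injAE ffunE; case: eqP => [->|_]; [exact: Hu | exact: rpred0].
  rewrite big1 ?mem0v // => A PA; have /memv_imgP[u Hu ->] := Hvs A PA.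
  rewrite injAE ffunE; case: eqP => // eBA; by rewrite eBA PA in PB.
move=> H.
have -> : x = \sum_(A | rng F U A && (#|A| == i)) @injA k s g A (x A).
  apply/ffunP=> B; rewrite sum_ffunE.
  under eq_bigr => A _ do rewrite injAE ffunE.
  case PB: (rng F U B && (#|B| == i)).
    rewrite (bigD1 B) //= eqxx big1 ?addr0 // => A /andP[_ /negPf].
    by rewrite eq_sym => ->.
  rewrite big1; last by move=> A PA; case: eqP => // eBA; rewrite eBA PA in PB.
  by have := H B; rewrite /spc PB memv0 => /eqP.
apply: memv_sumr => A PA; apply: memv_img; by have := H A; rewrite /spc PA.
Qed.


Lemma VB_S X Y : X \subset Y -> (VB phi X <= VB phi Y)%VS.
Proof.
move=> XY; apply/subv_sumP => a aX; apply: (sumv_sup a); last exact: subvv.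
exact: (subsetP XY).
Qed.

Lemma row_VB X e : e \in X -> row e phi \in VB phi X.
Proof. by move=> eX; apply: (subvP (sumv_sup e eX (subvv _))); apply: memv_line. Qed.

Lemma VB_U1 X e : VB phi (e |: X) = (VB phi X + <[row e phi]>)%VS.
Proof.
case eX: (e \in X).
  rewrite (setUidPr _); last by rewrite sub1set.
  by apply/esym/addv_idPl; rewrite -memvE row_VB.
by rewrite /VB big_setU1 ?eX //= addvC.
Qed.

Lemma spc_VB F U j B v : v \in spc F U j B -> v \in VB phi (Ihi :\: B).
Proof. by rewrite /spc; case: ifP => // _; rewrite memv0 => /eqP ->; exact: rpred0. Qed.

Lemma spc0 F U j B v : v \in spc F U j B -> ~~ (rng F U B && (#|B| == j)) -> v = 0.
Proof. by rewrite /spc => + /negPf H; rewrite H memv0 => /eqP. Qed.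

Lemma rngU1 F U A c : rng F U A -> c \in U -> rng F U (c |: A).
Proof.
rewrite /rng => /andP[FA AU] cU; apply/andP; split.
  by apply: subset_trans FA (subsetUr _ _).
by rewrite subUset sub1set cU AU.
Qed.

Lemma dgC F U i (x : Am) : x \in Cx F U i.+1 -> dg F U x \in Cx F U i.
Proof.
move/memC=> H; apply/memC => A; rewrite dgE.
case rA: (rng F U A); last exact: mem0v.
rewrite /spc rA /=; case: eqP => [eA|nA].
  apply: rpred_sum => c; rewrite inE => /andP[cA cU]; apply: rpredZ.
  apply: (subvP (VB_S _)) (spc_VB (H (c |: A))).
  by apply: setDS; apply: subsetUr.
rewrite big1 ?mem0v // => c; rewrite inE => /andP[cA cU].
rewrite (spc0 (H (c |: A))) ?scaler0 //.
by rewrite cardsU1 cA /= add1n eqSS; apply/nandP; right; apply/eqP.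
Qed.

Lemma dg2 F U f : U \subset N -> dg F U (dg F U f) = 0.
Proof.
move=> UN; apply/ffunP=> A; rewrite dgE ffunE.
case rA: (rng F U A) => //.
under eq_bigr => c cUA.
  rewrite dgE rngU1 //; last by move: cUA; rewrite inE => /andP[].
  rewrite scaler_sumr.
  have -> : U :\: (c |: A) = (U :\: A) :\ c.
    by apply/setP=> b; rewrite !inE negb_or andbA.
  under eq_bigr => c' _ do rewrite scalerA.
over.
apply: sum_antisym => c c'; rewrite !inE => /andP[cA cU] /andP[c'A c'U] cc'.
rewrite setUCA sgn_swap ?scaleNr //; first exact: (subsetP UN).
  exact: (subsetP UN).
by rewrite eq_sym.
Qed.

Definition he F U (e : 'I_s) (f : Am) : Am :=
  [ffun B : {set 'I_s} => if (e \in B) && rng F U B then sgn (B :\ e) e *: f (B :\ e) else 0].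

Lemma homot F U e (z : Am) : e \in U -> e \notin F -> U \subset N ->
  (forall A, ~~ rng F U A -> z A = 0) -> dg F U z = 0 ->
  z = dg F U (he F U e z).
Proof.
move=> eU eF UN zs dz.
set w := z - dg F U (he F U e z).
have dw : dg F U w = 0 by rewrite /w dgB dz dg2 // subrr.
have w1 : forall A, e \notin A -> w A = 0.
  move=> A eA; rewrite /w !ffunE.
  case rA: (rng F U A); last by rewrite zs ?rA // subrr.
  rewrite (bigD1 e) /=; last by rewrite inE eA.
  rewrite big1 ?addr0; last first.
    move=> c /andP[]; rewrite inE => /andP[cA cU] ce.
    by rewrite ffunE !inE eq_sym (negPf ce) (negPf eA) /= scaler0.
  rewrite ffunE setU11 rngU1 //= setU1K // scalerA sgn2 scale1r.
  by rewrite subrr.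
have w2 : forall A, e \in A -> w A = 0.
  move=> A eA; case rA: (rng F U A).
    have rA' : rng F U (A :\ e).
      move: rA; rewrite /rng => /andP[FA AU]; apply/andP; split.
        by apply/subsetP=> b bF; rewrite !inE (subsetP FA) // andbT; apply: contraNneq eF => <-.
      by apply: subset_trans AU; apply: subsetDl.
    have := congr1 (fun f : Am => f (A :\ e)) dw; rewrite dgE rA' ffunE.
    rewrite (bigD1 e) /=; last by rewrite !inE eqxx eU.
    rewrite big1 ?addr0; last first.
      move=> c /andP[]; rewrite !inE => /andP[cA cU] ce.
      by rewrite w1 ?scaler0 // !inE negb_or eq_sym ce /= eqxx.
    rewrite setD1K // => /(congr1 (fun v => sgn (A :\ e) e *: v)).
    by rewrite scalerA sgn2 scale1r scaler0.
  by rewrite /w !ffunE rA zs ?rA // subrr.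
apply/eqP; rewrite -subr_eq0; apply/eqP/ffunP=> A; rewrite [RHS]ffunE -/w.
by case eA: (e \in A); [rewrite w2 | rewrite w1 ?eA].
Qed.


Lemma dg_he F U e (f : Am) A : e \notin A -> e \in U -> rng F U A -> dg F U (he F U e f) A = f A.
Proof.
move=> eA eU rA; rewrite dgE rA (bigD1 e) /=; last by rewrite inE eA.
rewrite big1 ?addr0; last first.
  move=> c /andP[]; rewrite inE => /andP[cA cU] ce.
  by rewrite ffunE !inE eq_sym (negPf ce) (negPf eA) /= scaler0.
by rewrite ffunE setU11 rngU1 //= setU1K // scalerA sgn2 scale1r.
Qed.

Lemma he_mem F U i e (z : Am) : e \notin F ->
  (forall A, ~~ (rng F U A && (#|A| == i)) -> z A = 0) ->
  (forall B, e \in B -> rng F U B -> z (B :\ e) \in VB phi (Ihi :\: B)) ->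
  he F U e z \in Cx F U i.+1.
Proof.
move=> eF zs zB; apply/memC => B; rewrite ffunE.
case: ifP => [/andP[eB rB]|_]; last exact: mem0v.
rewrite /spc rB /=; case: eqP => [_|nB]; first by apply: rpredZ; apply: zB.
rewrite zs ?scaler0 ?mem0v //; apply/nandP; right.
by apply/eqP=> eqi; apply: nB; rewrite (cardsD1 e B) eB eqi.
Qed.

Lemma supp F U i x A : x \in Cx F U i -> ~~ (rng F U A && (#|A| == i)) -> x A = 0.
Proof. by move/memC/(_ A) => H; apply: spc0 H. Qed.

Lemma supp' F U i x A : x \in Cx F U i -> ~~ rng F U A -> x A = 0.
Proof. by move=> H rA; apply: supp H _; rewrite (negPf rA). Qed.

Lemma dgUe F U e (f : Am) : (forall A, e \in A -> f A = 0) -> dg F U f = dg F (U :\ e) f.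
Proof.
move=> fe; apply/ffunP=> A; rewrite !dgE.
case rA': (rng F (U :\ e) A).
  have [FA /subsetP AU] := andP rA'.
  have eA : e \notin A by apply/negP=> /AU; rewrite !inE eqxx.
  have rA : rng F U A by rewrite /rng FA; apply/subsetP=> b /AU; rewrite inE => /andP[].
  rewrite rA; case eU: (e \in U).
    rewrite (bigD1 e) /=; last by rewrite inE eA.
    rewrite fe ?setU11 // scaler0 add0r; apply: eq_bigl => c; rewrite !inE.
    by case: (c \in A); case: (c \in U); case: (c == e).
  apply: eq_bigl => c; rewrite !inE; case: eqP => [->|] //=; by rewrite eU andbF.
case rA: (rng F U A) => //; rewrite big1 // => c _; rewrite fe ?scaler0 //.
apply: contraFT rA'; rewrite !inE negb_or => /andP[_ eA]; move: rA; rewrite /rng => /andP[-> /subsetP AU].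
by apply/subsetP=> b bA; rewrite !inE AU // andbT; apply: contraNneq eA => <-.
Qed.

Lemma rngFe F U e A : e \in A -> rng (e |: F) U A = rng F U A.
Proof. by move=> eA; rewrite /rng subUset sub1set eA. Qed.

Lemma dgFe F U e (f : Am) A : e \in A -> dg (e |: F) U f A = dg F U f A.
Proof. by move=> eA; rewrite !dgE rngFe. Qed.

Lemma CxF F F' U i : F \subset F' -> (Cx F' U i <= Cx F U i)%VS.
Proof.
move=> FF'; apply/subvP=> x /memC H; apply/memC=> A; move: (H A); rewrite /spc.
case: ifP => [/andP[/andP[F'A AU] ->]|_]; last by rewrite memv0 => /eqP ->; exact: mem0v.
by rewrite /rng AU (subset_trans FF' F'A).
Qed.

Lemma CxU F U U' i : U \subset U' -> (Cx F U i <= Cx F U' i)%VS.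
Proof.
move=> UU'; apply/subvP=> x /memC H; apply/memC=> A; move: (H A); rewrite /spc.
case: ifP => [/andP[/andP[FA AU] ->]|_]; last by rewrite memv0 => /eqP ->; exact: mem0v.
by rewrite /rng FA (subset_trans AU UU').
Qed.

Lemma setDD1 (X B : {set 'I_s}) e : e \in X -> e \in B -> X :\: (B :\ e) = e |: (X :\: B).
Proof.
by move=> eX eB; apply/setP=> b; rewrite !inE; case: eqP => [->|] //=; rewrite eX eB.
Qed.


Lemma ffunBE (f h : Am) A : (f - h) A = f A - h A.
Proof. by rewrite !ffunE. Qed.
Lemma ffunDE (f h : Am) A : (f + h) A = f A + h A.
Proof. by rewrite !ffunE. Qed.
Lemma ffun0E A : (0 : Am) A = 0.
Proof. by rewrite !ffunE. Qed.

Lemma rngUe F U e A : e \notin A -> rng F (U :\ e) A = rng F U A.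
Proof. by move=> eA; rewrite /rng subsetD1 eA andbT. Qed.

Definition rk F U := (\dim (VB phi (Ihi :\: F)) - \dim (VB phi (Ihi :\: U)))%N.

Definition Ex F U := forall i, (i + rk F U != #|U|)%N ->
  forall x, x \in Cx F U i -> dg F U x = 0 ->
  exists2 y, y \in Cx F U i.+1 & x = dg F U y.

Lemma exact_all n : forall F U, #|U :\: F| = n -> F \subset U -> U \subset N ->
  U \subset Ihi -> Ex F U.
Proof.
elim: n => [|n IH] F U hn FU UN UI i hi x xC dx.
  have UF : U = F.
    by apply/eqP; rewrite eqEsubset FU andbT -setD_eq0 -cards_eq0 hn.
  exists 0; first exact: mem0v.
  rewrite dg0; apply/ffunP => A; rewrite ffun0E; apply: (supp xC).
  rewrite /rng UF; apply/nandP; case: (boolP ((F \subset A) && (A \subset F))) => [/andP[h1 h2]|]; [right| by left].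
  have AF : A = F by apply/eqP; rewrite eqEsubset h2 h1.
  move: hi; rewrite /rk UF subnn addn0 AF.
  by apply: contraNN => /eqP ->.
have [e eUF] : exists e, e \in U :\: F by apply/set0Pn; rewrite -cards_eq0 hn.
have eU : e \in U by move: eUF; rewrite inE => /andP[].
have eF : e \notin F by move: eUF; rewrite inE => /andP[].
have eI : e \in Ihi := subsetP UI e eU.
have eN : e \in N := subsetP UN e eU.
have FUe : F \subset U :\ e.
  by apply/subsetP => b bF; rewrite !inE (subsetP FU) // andbT; apply: contraNneq eF => <-.
have SB : forall B, B \subset U -> (VB phi (Ihi :\: U) <= VB phi (Ihi :\: B))%VS.
  by move=> B BU; apply: VB_S; apply: setDS.
have rBU : forall B, rng F U B -> B \subset U by move=> B /andP[].
case loop: (row e phi \in VB phi (Ihi :\: U)).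
  exists (he F U e x).
    apply: he_mem => //; first by move=> A hA; exact: supp xC hA.
    move=> B eB rB; have := spc_VB ((memC _ _ _ x).1 xC (B :\ e)).
    rewrite setDD1 // VB_U1; apply: subvP; rewrite subv_add subvv /= -memvE.
    exact: (subvP (SB _ (rBU _ rB))).
  by apply: homot => //; move=> A; exact: supp' xC.
have loopn : row e phi \notin VB phi (Ihi :\: U) by rewrite loop.
have cardn : #|(U :\: F) :\ e| = n by move: hn; rewrite (cardsD1 e) eUF add1n => -[].
have eqQ : U :\: (e |: F) = (U :\: F) :\ e.
  by apply/setP=> b; rewrite !inE negb_or; case: (b == e); case: (b \in F).
have eqP' : (U :\ e) :\: F = (U :\: F) :\ e.
  by apply/setP=> b; rewrite !inE; case: (b == e); case: (b \in F).
have dT : \dim (VB phi (Ihi :\: (U :\ e))) = (\dim (VB phi (Ihi :\: U))).+1.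
  by rewrite setDD1 // VB_U1 dim_add_line.
have eqIF : Ihi :\: F = e |: (Ihi :\: (e |: F)).
  apply/setP=> b; rewrite !inE; case: eqP => [->|] //=; by rewrite eI eF.
case gen: (row e phi \in VB phi (Ihi :\: (e |: F))).
  have dF : VB phi (Ihi :\: F) = VB phi (Ihi :\: (e |: F)).
    by rewrite eqIF VB_U1; apply/addv_idPl; rewrite -memvE.
  have le : (\dim (VB phi (Ihi :\: (U :\ e))) <= \dim (VB phi (Ihi :\: F)))%N.
    by apply: dimvS; apply: VB_S; apply: setDS.
  have rkP : (rk F (U :\ e)).+1 = rk F U by rewrite /rk; rewrite dT in le *; rewrite subnSK.
  have rkQ : rk (e |: F) U = rk F U by rewrite /rk dF.
  pose q : Am := [ffun A : {set 'I_s} => if e \in A then x A else 0].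
  have qC : q \in Cx (e |: F) U i.
    apply/memC => A; rewrite ffunE; case: ifP => eA; last exact: mem0v.
    by have := (memC _ _ _ x).1 xC A; rewrite /spc rngFe.
  have dq : dg (e |: F) U q = 0.
    apply/ffunP => A; rewrite ffun0E dgE; case: ifP => // rA.
    have eA : e \in A by move: rA => /andP[/subsetP H _]; apply: H; rewrite setU11.
    rewrite rngFe // in rA.
    apply: etrans (_ : _ = dg F U x A) _; last by rewrite dx ffun0E.
    rewrite dgE rA.
    by apply: eq_bigr => c _; rewrite ffunE !inE eA orbT.
  have FUQ : e |: F \subset U by rewrite subUset sub1set eU FU.
  have hiQ : (i + rk (e |: F) U != #|U|)%N by rewrite rkQ.
  have [y1 y1C qE] := IH (e |: F) U (etrans (congr1 (fun X => #|X|) eqQ) cardn) FUQ UN UI i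
    hiQ q qC dq.
  pose x' := x - dg F U y1.
  have y1C' : y1 \in Cx F U i.+1 by apply: (subvP (CxF _ _ _)) y1C; apply: subsetUr.
  have x'C : x' \in Cx F U i by apply: rpredB xC (dgC y1C').
  have x'e : forall A, e \in A -> x' A = 0.
    by move=> A eA; rewrite /x' ffunBE -(dgFe _ _ _ eA) -qE ffunE eA subrr.
  have dx' : dg F U x' = 0 by rewrite /x' dgB dx dg2 // subrr.
  have x'C' : x' \in Cx F (U :\ e) i.
    apply/memC=> A; case eA: (e \in A); first by rewrite x'e //; exact: mem0v.
    by have := (memC _ _ _ x').1 x'C A; rewrite /spc rngUe ?eA.
  have dx'' : dg F (U :\ e) x' = 0 by rewrite -dgUe.
  have cU : #|U| = (#|U :\ e|).+1 by rewrite (cardsD1 e U) eU.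
  have hiP : (i + rk F (U :\ e) != #|U :\ e|)%N.
    by move: hi; rewrite -rkP cU addnS eqSS.
  have [y2 y2C x'E] := IH F (U :\ e) (etrans (congr1 (fun X => #|X|) eqP') cardn) FUe
    (subset_trans (subD1set U e) UN) (subset_trans (subD1set U e) UI) i hiP x' x'C' dx''.
  exists (y1 + y2).
    apply: rpredD => //; apply: (subvP (CxU _ _ _)) y2C; exact: subD1set.
  rewrite dgD (@dgUe F U e y2); last first.
    move=> A eA; apply: supp' y2C _; rewrite /rng subsetD1 eA. by rewrite !andbF.
  by rewrite -x'E /x' addrC subrK.
have vS : row e phi \notin VB phi (Ihi :\: (e |: F)) by rewrite gen.
set S := VB phi (Ihi :\: (e |: F)).
set v := row e phi.
pose pi := daddv_pi <[v]> S.
have cap : (<[v]> :&: S = 0)%VS := line_cap0 vS.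
have piL : forall w, w \in <[v]>%VS -> pi w = w by move=> w; apply: daddv_pi_id.
have piS : forall w, w \in S -> pi w = 0.
  move=> w wS; have := daddv_pi_add cap (subvP (addvSr _ _) w wS).
  rewrite (@daddv_pi_id _ _ S <[v]>%VS) //; last by rewrite capvC.
  by move/(canRL (addrK w)); rewrite subrr.
have piIn : forall w, pi w \in <[v]>%VS by move=> w; apply: memv_pi.
have Sdec : forall B, e \in B -> rng F U B -> (VB phi (Ihi :\: B) <= S)%VS.
  move=> B eB /andP[FB _]; apply: VB_S; apply: setDS.
  by rewrite subUset sub1set eB FB.
pose x0 : Am := [ffun A : {set 'I_s} => x A - pi (x A)].
pose y := he F U e x0.
have yC : y \in Cx F U i.+1.
  apply: he_mem => //.
    by move=> A hA; rewrite ffunE (supp xC hA) linear0 subrr.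
  move=> B eB rB; rewrite ffunE; have := spc_VB ((memC _ _ _ x).1 xC (B :\ e)).
  rewrite setDD1 // VB_U1 => /memv_addP [a aIn [b bIn ->]].
  rewrite linearD /= piS ?piL //; last exact: (subvP (Sdec _ eB rB)).
  have -> : a + b - (0 + b) = a by rewrite add0r addrK.
  exact: aIn.
pose z := x - dg F U y.
have zC : z \in Cx F U i by apply: rpredB xC (dgC yC).
have dz : dg F U z = 0 by rewrite /z dgB dx dg2 // subrr.
have z1 : forall A, e \notin A -> z A = pi (x A).
  move=> A eA; case rA: (rng F U A).
    by rewrite /z ffunBE dg_he // ffunE opprB addrC subrK.
  by rewrite (supp' zC) ?rA // (supp' xC) ?rA // linear0.
have z2 : forall A, e \in A -> z A = 0.
  move=> A eA; case rA: (rng F U A); last by rewrite (supp' zC) ?rA.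
  have rA' : rng F U (A :\ e).
    move: rA; rewrite /rng => /andP[FA AU]; apply/andP; split.
      by apply/subsetP=> b bF; rewrite !inE (subsetP FA) // andbT; apply: contraNneq eF => <-.
    by apply: subset_trans AU; apply: subsetDl.
  have := congr1 (fun f : Am => f (A :\ e)) dz; rewrite dgE rA' ffun0E.
  rewrite (bigD1 e) /=; last by rewrite !inE eqxx eU.
  rewrite setD1K //.
  set t := \sum_(c | _) _.
  have tL : t \in <[v]>%VS.
    apply: rpred_sum => c /andP[]; rewrite !inE => /andP[cA cU] ce.
    by apply: rpredZ; rewrite z1 // !inE negb_or eq_sym ce /= eqxx.
  move/(congr1 (fun w => sgn (A :\ e) e *: w)); rewrite scalerDr scalerA sgn2 scale1r scaler0.
  move/eqP; rewrite addr_eq0 => /eqP zA.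
  have zAL : z A \in <[v]>%VS by rewrite zA rpredN rpredZ.
  rewrite -(piL _ zAL) piS //; apply: (subvP (Sdec _ eA rA)).
  exact: spc_VB ((memC _ _ _ z).1 zC A).
case: n IH hn cardn => [|n] IH hn cardn.
  exists y => //; apply/eqP; rewrite -subr_eq0; apply/eqP.
  apply/ffunP=> A; rewrite ffun0E -/z.
  case eA: (e \in A); first exact: z2.
  case rA: (rng F U A); last by rewrite (supp' zC) ?rA.
  have AF : A = F.
    apply/eqP; rewrite eqEsubset; move: rA => /andP[-> /subsetP AU]; rewrite andbT.
    apply/subsetP=> b bA; apply: contraTT isT => bF.
    have : b \in U :\: F :\ e.
      rewrite !inE bF AU //=; apply/andP; split => //; apply/eqP=> be; by rewrite be eA in bA.
    by move: cardn => /eqP; rewrite cards_eq0 => /eqP ->; rewrite inE.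
  apply: (supp zC); rewrite rA /=; apply: contra hi => /eqP iF.
  have eqUF : U = e |: F.
    apply/eqP; rewrite eqEsubset; apply/andP; split; last by rewrite subUset sub1set eU FU.
    apply/subsetP=> b bU; rewrite !inE; case: (eqVneq b e) => //= be; apply: contraTT isT => bF.
    have : b \in U :\: F :\ e by rewrite !inE be bF bU.
    by move: cardn => /eqP; rewrite cards_eq0 => /eqP ->; rewrite inE.
  have rk1 : rk F U = 1%N.
    rewrite /rk eqIF VB_U1 dim_add_line //.
    have -> : Ihi :\: U = Ihi :\: (e |: F) by rewrite eqUF.
    by rewrite subSnn.
  by rewrite rk1 -iF AF addn1 eqUF cardsU1 eF add1n.
have [e' e'P] : exists e', e' \in (U :\: F) :\ e by apply/set0Pn; rewrite -cards_eq0 cardn.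
move: e'P; rewrite !inE => /and3P[e'e e'F e'U].
pose y2 := he F U e' z.
have y2C : y2 \in Cx F U i.+1.
  apply: he_mem => //; first by move=> A hA; exact: supp zC hA.
  move=> B e'B rB; case eB: (e \in B).
    by rewrite z2 ?mem0v // !inE eB andbT eq_sym.
  rewrite z1; last by rewrite !inE eB andbF.
  have /vlineP [a ->] := piIn (x (B :\ e')).
  by apply: rpredZ; apply: row_VB; rewrite !inE eB eI.
have zE : z = dg F U y2 by apply: homot => //; move=> A; exact: supp' zC.
exists (y + y2); first exact: rpredD.
by rewrite dgD -zE /z addrC subrK.
Qed.

Lemma dim_Cx F U i : \dim (Cx F U i) =
  (\sum_(A | rng F U A && (#|A| == i)) \dim (VB phi (Ihi :\: A)))%N.
Proof.
have dx : directv (Cx F U i).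
  apply/directv_sum_independent => us Hus sum0 A PA.
  have /memv_imgP [u uIn uE] := Hus A PA.
  have := congr1 (fun f : Am => f A) sum0; rewrite sum_ffunE ffun0E (bigD1 A) //= big1 ?addr0.
    rewrite uE injAE ffunE eqxx => u0; rewrite u0; apply/ffunP=> B; rewrite !ffunE.
    by case: ifP.
  move=> B /andP[PB BA]; have /memv_imgP [w _ ->] := Hus B PB.
  by rewrite injAE ffunE eq_sym (negPf BA).
rewrite (directvP dx) /=; apply: eq_bigr => A PA; apply: limg_dim_eq.
apply/eqP; rewrite -subv0; apply/subvP=> u /memv_capP [_]; rewrite memv_ker injAE.
move=> /eqP /(congr1 (fun f : Am => f A)); rewrite !ffunE eqxx => ->; exact: mem0v.
Qed.

Lemma dim_Cx_big F U i : (#|U| < i)%N -> \dim (Cx F U i) = 0%N.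
Proof.
move=> Ui; rewrite dim_Cx big_pred0 // => A; apply/negbTE/nandP.
case rA: (rng F U A); [right|by left].
have : (#|A| <= #|U|)%N by apply: subset_leq_card; case/andP: rA.
by move=> le; apply/eqP=> eA; rewrite eA in le; rewrite ltnNge le in Ui.
Qed.

Lemma dgC0 F U x : x \in Cx F U 0 -> dg F U x = 0.
Proof.
move=> xC; apply/ffunP=> A; rewrite dgE ffun0E; case: ifP => // _.
rewrite big1 // => c _; rewrite (supp xC) ?scaler0 //.
by rewrite cards_eq0 andbC; apply/nandP; left; apply/set0Pn; exists c; rewrite setU11.
Qed.

End Cx.

Lemma VB_le (k : fieldType) (s g : nat) (phi : 'M[k]_(s, g)) (X Y : {set 'I_s}) :
  (\dim (VB phi (X :|: Y)) <= \dim (VB phi X) + #|Y|)%N.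
Proof.
have S : (VB phi (X :|: Y) <= VB phi X + VB phi Y)%VS.
  apply/subv_sumP => a; rewrite inE => /orP[aX|aY].
    by apply: subv_trans (addvSl _ _); apply: (sumv_sup a aX); exact: subvv.
  by apply: subv_trans (addvSr _ _); apply: (sumv_sup a aY); exact: subvv.
apply: leq_trans (dimvS S) _; apply: leq_trans (dimv_add_leqif _ _) _.
rewrite leq_add2l; apply: leq_trans (dimv_leq_sum _ _ _) _.
rewrite -sum1_card; apply: leq_sum => a _; rewrite dim_vline; by case: (_ != 0).
Qed.

From mathcomp Require Import zify.

Lemma toggle_sum (n : nat) (X : {set 'I_n}) :
  X != set0 -> \sum_(J : {set 'I_n} | J \subset X) (-1) ^+ #|J| = 0 :> int.
Proof.
case/set0Pn=> a aX.
pose t (J : {set 'I_n}) := if a \in J then J :\ a else a |: J.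
have tK : involutive t.
  move=> J; rewrite /t; case aJ: (a \in J).
    by rewrite !inE eqxx /= setD1K.
  by rewrite setU11 setU1K ?aJ.
have tinj : injective t := inv_inj tK.
set S := \sum_(J | _) _.
have E : S = - S.
  rewrite {1}/S (reindex_inj tinj) /= /S -sumrN; apply: eq_big => J.
    rewrite /t; case aJ: (a \in J).
      by rewrite subDset (setUidPr _) // sub1set.
    by rewrite subUset sub1set aX.
  rewrite /t; case aJ: (a \in J) => _.
    by rewrite (cardsD1 a J) aJ add1n exprS mulN1r opprK.
  by rewrite cardsU1 aJ add1n exprS mulN1r.
lia.
Qed.

Lemma telescope (a : nat -> int) m :
  \sum_(j < m) (-1) ^+ j * (a j + a j.+1) = a 0%N - (-1) ^+ m * a m.
Proof.
elim: m => [|m IH]; first by rewrite big_ord0 expr0 mul1r subrr.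
rewrite big_ord_recr /= IH exprS; ring.
Qed.

Lemma dcxE (k : fieldType) (s g : nat) (omega : 'I_s -> nat) (Ilo : {set 'I_s}) u :
  @dcx k s g omega Ilo u = dg omega Ilo set0 Ilo u.
Proof.
have E : forall f, @dcx_fun k s g omega Ilo f = dg omega Ilo set0 Ilo f.
  by move=> f; apply/ffunP=> A; rewrite !ffunE /rng sub0set.
rewrite /dcx linfunE'; first exact: E.
by move=> a f h; rewrite !E dg_lin.
Qed.

Theorem corollary4p6 (k : fieldType) (m s g : nat)
  (dE : 'I_s -> mdeg_t m) (dG : 'I_g -> mdeg_t m)
  (Phi : 'I_s -> 'I_g -> {mpoly k[m]})
  (hPhi : mhomog_map dE dG Phi) (hmin : minimal_pres Phi)
  (alpha : mdeg_t m) (Ilo Ihi : {set 'I_s})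
  (hgen : generic_interval dE alpha Ilo Ihi)
  (omega : 'I_s -> nat) (homega : {in Ilo &, injective omega}) :
  forall i : nat,
    (dimH (phi_of Phi) omega Ilo Ihi i)%:Z =
    (if i == (#|Ilo| - rank_Malpha (phi_of Phi) Ilo Ihi)%N
     then beta_Malpha (phi_of Phi) Ilo Ihi else 0).
Proof.
move=> i.
set phi := phi_of Phi.
have [[A0 [A0n A0d]] hI] := hgen.
have A0in : A0 \in [set A | (A != set0) && (degS dE A == alpha)] by rewrite inE A0n A0d eqxx.
rewrite hI inE in A0in; case/andP: A0in => IA0 A0I.
have IloIhi : Ilo \subset Ihi := subset_trans IA0 A0I.
have Ilon : Ilo != set0.
  have : Ilo \in [set A : {set 'I_s} | (Ilo \subset A) && (A \subset Ihi)] by rewrite inE subxx IloIhi.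
  by rewrite -hI inE => /andP[].
set n := #|Ilo|.
set r := rank_Malpha phi Ilo Ihi.
have hC : forall j, Vcx phi Ilo Ihi j = Cx phi Ihi set0 Ilo j.
  by move=> j; rewrite /Vcx /Cx; apply: eq_bigl => A; rewrite /rng sub0set.
have rkE : rk phi Ihi set0 Ilo = r by rewrite /rk setD0.
set D := @dcx k s g omega Ilo.
pose K j := \dim (Vcx phi Ilo Ihi j :&: lker D).
pose Im j := \dim (D @: Vcx phi Ilo Ihi j).
pose Dm j := \dim (Vcx phi Ilo Ihi j).
have rn : forall j, (K j + Im j = Dm j)%N by move=> j; exact: limg_ker_dim.
have incl : forall j, (D @: Vcx phi Ilo Ihi j.+1 <= Vcx phi Ilo Ihi j :&: lker D)%VS.
  move=> j; apply/subvP=> w /memv_imgP [u uC ->]; rewrite memv_cap memv_ker /D !dcxE.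
  rewrite hC in uC; rewrite hC (@dgC _ _ _ _ omega Ilo Ihi _ _ _ _ uC) dg2 //=.
have ex : forall j, (j + r != n)%N -> (Vcx phi Ilo Ihi j :&: lker D <= D @: Vcx phi Ilo Ihi j.+1)%VS.
  move=> j hj; apply/subvP => w /memv_capP [wC]; rewrite memv_ker /D dcxE => /eqP dw.
  rewrite hC in wC.
  have hj' : (j + rk phi Ihi set0 Ilo != #|Ilo|)%N by rewrite rkE.
  have := @exact_all _ _ _ phi omega Ilo Ihi homega #|Ilo :\: set0| set0 Ilo erefl (sub0set _)
    (subxx _) IloIhi j hj' w wC dw.
  case=> y yC ->.
  by rewrite -dcxE; apply: memv_img; rewrite hC.
have Im0 : Im 0%N = 0%N.
  apply/eqP; rewrite dimv_eq0 -subv0; apply/subvP => w /memv_imgP [u uC ->].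
  by rewrite /D dcxE (@dgC0 _ _ _ phi omega Ilo Ihi) ?mem0v // -hC.
have ImBig : Im n.+1 = 0%N.
  have := rn n.+1; rewrite /Dm hC dim_Cx_big // => /eqP; rewrite addn_eq0 => /andP[_ /eqP].
  done.
have r_le : (r <= n)%N.
  rewrite /r /rank_Malpha leq_subLR.
  have IE : Ihi = (Ihi :\: Ilo) :|: Ilo.
    apply/setP=> b; rewrite !inE; case bI: (b \in Ilo); rewrite ?orbT ?orbF //=.
    by rewrite (subsetP IloIhi).
  rewrite {1}IE.
  exact: VB_le.
have Hz : forall j, j != (n - r)%N -> K j = Im j.+1.
  move=> j hj; apply/eqP; rewrite eqn_leq (dimvS (incl j)) andbT; apply: dimvS; apply: ex.
  by apply: contra hj => /eqP <-; rewrite addnK.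
have dimHE : forall j, dimH phi omega Ilo Ihi j = (K j - Im j.+1)%N by [].
case: eqP => [->|hi]; last by rewrite dimHE Hz ?subnn //; apply/eqP.
set i0 := (n - r)%N.
have i0lt : (i0 < n.+1)%N by rewrite ltnS leq_subr.
have sq : forall a, (-1) ^+ a * (-1) ^+ a = 1 :> int.
  by move=> a; rewrite -exprD -signr_odd oddD addbb.
(* Euler characteristic, homology side *)
have Eu1 : \sum_(j < n.+1) (-1) ^+ j * (Dm j)%:Z = (-1) ^+ i0 * (dimH phi omega Ilo Ihi i0)%:Z.
  have e1 : forall j, (Dm j)%:Z = ((K j)%:Z - (Im j.+1)%:Z) + ((Im j)%:Z + (Im j.+1)%:Z).
    by move=> j; rewrite -rn PoszD; ring.
  under eq_bigr => j _ do rewrite e1 mulrDr.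
  rewrite big_split /= (telescope (fun j => (Im j)%:Z)) Im0 ImBig mulr0 subr0.
  rewrite (bigD1 (Ordinal i0lt)) //= big1 ?addr0; last first.
    move=> j; rewrite -val_eqE /= => hj; rewrite Hz ?subrr ?mulr0 //.
  by rewrite dimHE subzn // (dimvS (incl i0)).
have sgnsub : forall a b, (b <= a)%N -> (-1) ^+ (a - b) = (-1) ^+ a * (-1) ^+ b :> int.
  by move=> a b le; rewrite -{2}(subnK le) exprD -mulrA sq mulr1.
set T := Ihi :\: Ilo.
have Eu2 : \sum_(j < n.+1) (-1) ^+ j * (Dm j)%:Z =
    \sum_(A : {set 'I_s} | A \subset Ilo) (-1) ^+ #|A| * (\dim (VB phi (Ihi :\: A)))%:Z.
  under eq_bigr => j _ do rewrite /Dm hC dim_Cx (big_morph Posz PoszD (erefl (Posz 0))) mulr_sumr big_mkcond.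
  rewrite exchange_big /= [RHS]big_mkcond; apply: eq_bigr => A _.
  rewrite /rng sub0set /=; case AI: (A \subset Ilo); last by rewrite big1.
  have lt : (#|A| < n.+1)%N by rewrite ltnS subset_leq_card.
  rewrite (bigD1 (Ordinal lt)) //= eqxx big1 ?addr0 // => j; rewrite -val_eqE /= => hj.
  by rewrite eq_sym (negPf hj).
have Eu3 : \sum_(A : {set 'I_s} | A \subset Ilo) (-1) ^+ #|A| * (\dim (VB phi (Ihi :\: A)))%:Z =
    (-1) ^+ n * \sum_(J : {set 'I_s} | J \subset Ilo) (-1) ^+ #|J| * (\dim (VB phi (T :|: J)))%:Z.
  rewrite (reindex_onto (fun J => Ilo :\: J) (fun J => Ilo :\: J)) /=; last first.
    by move=> A AI; rewrite setDDr setDv set0U; apply/setIidPr.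
  rewrite mulr_sumr; apply: eq_big => J.
    rewrite subsetDl /= setDDr setDv set0U; apply/eqP/idP => [<-|/setIidPr //].
    exact: subsetIl.
  move=> /andP[_ /eqP JE].
  have JI : J \subset Ilo by rewrite -JE setDDr setDv set0U subsetIl.
  rewrite cardsD (setIidPr JI) sgnsub ?subset_leq_card // -mulrA; congr (_ * (_ * _)).
  congr (Posz (\dim (VB phi _))); apply/setP=> b; rewrite !inE.
  case bJ: (b \in J); first by rewrite (subsetP IloIhi) ?(subsetP JI) ?orbT ?andbT.
  by rewrite /= orbF.
have H2 : \sum_(J : {set 'I_s} | J \subset Ilo) (-1) ^+ #|J| * rk_alpha phi Ilo Ihi J =
    \sum_(J : {set 'I_s} | J \subset Ilo) (-1) ^+ #|J| * (\dim (VB phi (T :|: J)))%:Z.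
  rewrite /rk_alpha -/T; under eq_bigr do rewrite mulrBr.
  by rewrite sumrB -mulr_suml toggle_sum // mul0r subr0.
have rkI : rk_alpha phi Ilo Ihi Ilo = r%:Z.
  rewrite /rk_alpha -/T.
  have TI : T :|: Ilo = Ihi.
    apply/setP=> b; rewrite !inE; case bI: (b \in Ilo); rewrite ?orbT ?orbF //=.
    by rewrite (subsetP IloIhi).
  rewrite TI subzn //; apply: dimvS; apply: VB_S; exact: subsetDl.
rewrite /beta_Malpha rkI absz_nat H2.
have := etrans (esym Eu1) (etrans Eu2 Eu3).
have nE : n = (i0 + r)%N by rewrite subnK.
rewrite nE exprD => H.
have -> : (dimH phi omega Ilo Ihi i0)%:Z = (-1) ^+ i0 * ((-1) ^+ i0 * (dimH phi omega Ilo Ihi i0)%:Z).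
  by rewrite mulrA sq mul1r.
by rewrite H mulrA mulrA sq mul1r.
Qed.
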